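(* Let $(\mathcal{P},\cdot)$ be a finite-dimensional admissible Poisson algebra. Its nilradical $\mathcal{N}(\mathcal{P})$ (the unique maximal two-sided ideal of $(\mathcal{P},\cdot)$ consisting of nilpotent elements) coincides with the largest Lie ideal of $\mathfrak{g}_{\mathcal{P}}$ contained in the Jacobson radical $\mathcal{J}(\mathcal{A}_{\mathcal{P}})$ of the commutative associative algebra $\mathcal{A}_{\mathcal{P}}$.
   Context: $\mathbb{K}$ is a field of characteristic different from $2$ and $3$. Associator: $A(X,Y,Z)=(X\cdot Y)\cdot Z-X\cdot(Y\cdot Z)$. An admissible Poisson algebra is a $\mathbb{K}$-vector space $\mathcal{P}$ with a bilinear product $\cdot$ satisfying $3A(X,Y,Z)=(X\cdot Z)\cdot Y+(Y\cdot Z)\cdot X-(Y\cdot X)\cdot Z-(Z\cdot X)\cdot Y$ for all $X,Y,Z$. Its bracket $\{X,Y\}=\frac12(X\cdot Y-Y\cdot X)$ is a Lie bracket and its symmetrized product $X\bullet Y=\frac12(X\cdot Y+Y\cdot X)$ is commutative and associative; $\mathfrak{g}_{\mathcal{P}}=(\mathcal{P},\{\,,\,\})$, $\mathcal{A}_{\mathcal{P}}=(\mathcal{P},\bullet)$. Powers: $X^1=X$, $X^{i+1}=X\cdot X^i$; $X$ is nilpotent if $X^r=0$ for some $r$. *)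

(* Defs.v *)
From HB Require Import structures.
From mathcomp Require Import all_boot all_order all_algebra.
Set Implicit Arguments. Unset Strict Implicit. Unset Printing Implicit Defensive.
Import GRing.Theory.
Local Open Scope ring_scope.

Section AdmissiblePoisson.
Variables (K : fieldType) (V : vectType K) (mul : V -> V -> V).

Definition bilinear_prod : Prop :=
  (forall (a : K) (x y z : V), mul (a *: x + y) z = a *: mul x z + mul y z) /\
  (forall (a : K) (x y z : V), mul z (a *: x + y) = a *: mul z x + mul z y).

Definition assoc3 (x y z : V) : V := mul (mul x y) z - mul x (mul y z).

Definition admissible_identity : Prop :=
  forall x y z : V,
    3%:R *: assoc3 x y z =
      mul (mul x z) y + mul (mul y z) x - mul (mul y x) z - mul (mul z x) y.

Definition pbracket (x y : V) : V := (2%:R)^-1 *: (mul x y - mul y x).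
Definition psym (x y : V) : V := (2%:R)^-1 *: (mul x y + mul y x).

(* powers: mpow x n = X^(n+1), i.e. X^1 = X, X^(i+1) = X . X^i *)
Fixpoint mpow (x : V) (n : nat) : V :=
  match n with 0 => x | n'.+1 => mul x (mpow x n') end.

Definition nilpotent_elt (x : V) : Prop := exists n : nat, mpow x n = 0.

Definition two_sided_ideal (U : {vspace V}) : Prop :=
  forall x y : V, x \in U -> mul x y \in U /\ mul y x \in U.

Definition lie_ideal (U : {vspace V}) : Prop :=
  forall x y : V, x \in U -> pbracket x y \in U.

Definition sym_ideal (U : {vspace V}) : Prop :=
  forall x y : V, x \in U -> psym x y \in U.

Definition is_nilradical (N : {vspace V}) : Prop :=
  [/\ two_sided_ideal N, (forall x, x \in N -> nilpotent_elt x) &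
      forall I : {vspace V}, two_sided_ideal I ->
        (forall x, x \in I -> nilpotent_elt x) -> (I <= N)%VS].

(* quasi-regularity in the (possibly non-unital) commutative algebra (P,•) *)
Definition quasi_regular (x : V) : Prop := exists y : V, x + y + psym x y = 0.

Definition is_jacobson_radical (J : {vspace V}) : Prop :=
  [/\ sym_ideal J, (forall x, x \in J -> quasi_regular x) &
      forall I : {vspace V}, sym_ideal I ->
        (forall x, x \in I -> quasi_regular x) -> (I <= J)%VS].

Definition is_largest_lie_ideal_in (J M : {vspace V}) : Prop :=
  [/\ lie_ideal M, (M <= J)%VS &
      forall I : {vspace V}, lie_ideal I -> (I <= J)%VS -> (I <= M)%VS].

End AdmissiblePoisson.

(* Main.v *)
Require Import Defs.
From HB Require Import structures.
From mathcomp Require Import all_boot all_order all_algebra.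
Import GRing.Theory.
Local Open Scope ring_scope.
From mathcomp Require Import ring.
Set Implicit Arguments. Unset Strict Implicit. Unset Printing Implicit Defensive.
From Stdlib Require Import Classical.

Section S.
Variables (K : fieldType) (V : vectType K) (mul : V -> V -> V).
Hypothesis h2 : 2%:R != 0 :> K.
Hypothesis h3 : 3%:R != 0 :> K.
Hypothesis hbil : bilinear_prod mul.
Hypothesis hadm : admissible_identity mul.

Lemma coord_ext (u v : V) :
  (forall i, coord (vbasis fullv) i u = coord (vbasis fullv) i v) -> u = v.
Proof.
move=> H; rewrite (coord_vbasis (memvf u)) (coord_vbasis (memvf v)).
by apply: eq_bigr => i _; rewrite H.
Qed.

Lemma mul0l z : mul 0 z = 0.
Proof. have := hbil.1 1 0 0 z; rewrite !scale1r addr0 => H; apply: (addrI (mul 0 z)); by rewrite addr0 -H. Qed.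
Lemma mul0r z : mul z 0 = 0.
Proof. have := hbil.2 1 0 0 z; rewrite !scale1r addr0 => H; apply: (addrI (mul z 0)); by rewrite addr0 -H. Qed.
Lemma mulDl x y z : mul (x + y) z = mul x z + mul y z.
Proof. by have := hbil.1 1 x y z; rewrite !scale1r. Qed.
Lemma mulDr x y z : mul z (x + y) = mul z x + mul z y.
Proof. by have := hbil.2 1 x y z; rewrite !scale1r. Qed.
Lemma mulZl a x z : mul (a *: x) z = a *: mul x z.
Proof. by have := hbil.1 a x 0 z; rewrite !addr0 mul0l addr0. Qed.
Lemma mulZr a x z : mul z (a *: x) = a *: mul z x.
Proof. by have := hbil.2 a x 0 z; rewrite !addr0 mul0r addr0. Qed.
Lemma mulNl x z : mul (- x) z = - mul x z.
Proof. by rewrite -scaleN1r mulZl scaleN1r. Qed.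
Lemma mulNr x z : mul z (- x) = - mul z x.
Proof. by rewrite -scaleN1r mulZr scaleN1r. Qed.
Lemma mulBl x y z : mul (x - y) z = mul x z - mul y z.
Proof. by rewrite mulDl mulNl. Qed.
Lemma mulBr x y z : mul z (x - y) = mul z x - mul z y.
Proof. by rewrite mulDr mulNr. Qed.

Definition mulE := (mulDl, mulDr, mulZl, mulZr, mulNl, mulNr, mul0l, mul0r).

Local Notation s := (psym mul).
Local Notation b := (pbracket mul).

Lemma coordE (i : 'I_(\dim (fullv : {vspace V}))) :
  (forall u v, coord (vbasis fullv) i (u + v) = coord (vbasis fullv) i u + coord (vbasis fullv) i v) *
  (forall u, coord (vbasis fullv) i (- u) = - coord (vbasis fullv) i u) *
  (forall a u, coord (vbasis fullv) i (a *: u) = a * coord (vbasis fullv) i u) *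
  (coord (vbasis fullv) i 0 = 0).
Proof. by split; [split; [split|]|] => *; rewrite ?linearD ?linearN ?linearZ ?linear0. Qed.

Ltac modlin := apply: coord_ext; let i := fresh "i" in intro i; rewrite /psym /pbracket ?mulE !(coordE i);
  (field; rewrite ?h2 ?h3 //) || ring.

Lemma s_assoc x y z : s (s x y) z = s x (s y z).
Proof.
pose D x y z := 3%:R *: assoc3 mul x y z -
      (mul (mul x z) y + mul (mul y z) x - mul (mul y x) z - mul (mul z x) y).
have D0 x1 y1 z1 : D x1 y1 z1 = 0.
  by rewrite /D hadm; apply: subrr.
apply/eqP; rewrite -subr_eq0; apply/eqP.
have -> : s (s x y) z - s x (s y z) =
   (2%:R^-1 * 2%:R^-1 * 3%:R^-1) *: (D x y z + D x z y - D z x y - D z y x); last first.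
  by rewrite !D0 !(addr0, subr0) scaler0.
rewrite /D /assoc3; modlin.
Qed.

Lemma leibniz x y z : b x (s y z) = s (b x y) z + s y (b x z).
Proof.
pose D x y z := 3%:R *: assoc3 mul x y z -
      (mul (mul x z) y + mul (mul y z) x - mul (mul y x) z - mul (mul z x) y).
have D0 x1 y1 z1 : D x1 y1 z1 = 0.
  by rewrite /D hadm; apply: subrr.
apply/eqP; rewrite -subr_eq0; apply/eqP.
have -> : b x (s y z) - (s (b x y) z + s y (b x z)) =
   (2%:R^-1 * 2%:R^-1 * 3%:R^-1) *: (- D x y z - D x z y + D y x z - D y z x + D z x y - D z y x); last first.
  by rewrite !D0 !(addr0, subr0, oppr0) scaler0.
rewrite /D /assoc3; modlin.
Qed.

Lemma sC x y : s x y = s y x.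
Proof. by rewrite /psym addrC. Qed.
Lemma bN x y : b x y = - b y x.
Proof. modlin. Qed.
Lemma bxx x : b x x = 0.
Proof. modlin. Qed.
Lemma mul_bs x y : mul x y = b x y + s x y.
Proof. modlin. Qed.
Lemma sDl x y z : s (x + y) z = s x z + s y z. Proof. modlin. Qed.
Lemma sDr x y z : s z (x + y) = s z x + s z y. Proof. modlin. Qed.
Lemma sZl a x z : s (a *: x) z = a *: s x z. Proof. modlin. Qed.
Lemma sZr a x z : s z (a *: x) = a *: s z x. Proof. modlin. Qed.
Lemma sNl x z : s (- x) z = - s x z. Proof. modlin. Qed.
Lemma sNr x z : s z (- x) = - s z x. Proof. modlin. Qed.
Lemma s0l z : s 0 z = 0. Proof. modlin. Qed.
Lemma s0r z : s z 0 = 0. Proof. modlin. Qed.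
Lemma bDl x y z : b (x + y) z = b x z + b y z. Proof. modlin. Qed.
Lemma bZl a x z : b (a *: x) z = a *: b x z. Proof. modlin. Qed.
Lemma b0l z : b 0 z = 0. Proof. modlin. Qed.
Lemma sBl x y z : s (x - y) z = s x z - s y z. Proof. by rewrite sDl sNl. Qed.
Lemma sBr x y z : s z (x - y) = s z x - s z y. Proof. by rewrite sDr sNr. Qed.
Definition sE := (sDl, sDr, sZl, sZr, sNl, sNr, s0l, s0r).
Definition sE' := (sDl, sDr, sNl, sNr, s0l, s0r).


Fixpoint spow (x : V) (n : nat) : V :=
  match n with 0 => x | n'.+1 => s x (spow x n') end.

Lemma b_spow x n : b x (spow x n) = 0.
Proof. elim: n => [|n IH] /=; first exact: bxx.
by rewrite leibniz bxx IH s0l s0r addr0. Qed.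

Lemma mpow_spow x n : mpow mul x n = spow x n.
Proof. elim: n => [|n IH] //=; by rewrite IH mul_bs b_spow add0r. Qed.

Lemma spowM x m n : s (spow x m) (spow x n) = spow x (m + n).+1.
Proof. elim: m => [|m IH] //=; by rewrite s_assoc IH. Qed.

Lemma s_sumr a I r (P : pred I) (F : I -> V) :
  s a (\sum_(i <- r | P i) F i) = \sum_(i <- r | P i) s a (F i).
Proof. exact: (big_morph (s a) (fun u v => sDr u v a) (s0r a)). Qed.
Lemma s_suml a I r (P : pred I) (F : I -> V) :
  s (\sum_(i <- r | P i) F i) a = \sum_(i <- r | P i) s (F i) a.
Proof. exact: (big_morph (s^~ a) (fun u v => sDl u v a) (s0l a)). Qed.
Lemma b_suml a I r (P : pred I) (F : I -> V) :
  b (\sum_(i <- r | P i) F i) a = \sum_(i <- r | P i) b (F i) a.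
Proof. exact: (big_morph (b^~ a) (fun u v => bDl u v a) (b0l a)). Qed.

Lemma nil_qreg x : nilpotent_elt mul x -> quasi_regular mul x.
Proof.
move=> [n]; rewrite mpow_spow => Hn.
pose q n := \sum_(k < n) (-1) ^+ k.+1 *: spow x k.
have E m : x + q m + s x (q m) = (-1) ^+ m *: spow x m.
  elim: m => [|m IH]; first by rewrite /q big_ord0 s0r !addr0 expr0 scale1r.
  rewrite /q big_ord_recr /= -/(q m) sDr sZr.
  have -> : x + (q m + (-1) ^+ m.+1 *: spow x m) + (s x (q m) + (-1) ^+ m.+1 *: s x (spow x m))
     = (x + q m + s x (q m)) + (-1) ^+ m.+1 *: spow x m + (-1) ^+ m.+1 *: s x (spow x m).
    by modlin.
  rewrite IH exprS; modlin.
by exists (q n); rewrite E Hn scaler0.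
Qed.

Definition qreg := quasi_regular mul.

Lemma key (I : {vspace V}) : sym_ideal mul I -> (forall x, x \in I -> qreg x) ->
  forall u w, u \in I -> s w u = w -> w = 0.
Proof.
move=> HI Hq u w uI Hw.
have [y Hy] : qreg (- u) by apply: Hq; rewrite memvN.
have e : s y (s u w) = s (s u y) w by rewrite [s u y]sC s_assoc.
have -> : w = (w - s u w) + s y (w - s u w) - s (- u + y + s (- u) y) w.
  rewrite !sE' e; modlin.
by rewrite Hy sC Hw subrr s0r s0l !subr0 addr0.
Qed.


Lemma spow_mem (I : {vspace V}) : sym_ideal mul I -> forall x n, x \in I -> spow x n \in I.
Proof.
move=> HI x n xI; elim: n => [|n IH] //=.
by have [] := HI x (spow x n) xI.
Qed.

Lemma Qn (I : {vspace V}) : sym_ideal mul I -> (forall x, x \in I -> qreg x) ->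
  forall x, x \in I -> forall n m (c : nat -> K),
  \sum_(i < n) c i *: spow x (m + i) = 0 -> (exists i, (i < n)%N /\ c i != 0) ->
  nilpotent_elt mul x.
Proof.
move=> HI Hq x xI; elim=> [|n IH] m c.
  by move=> _ [i [//]].
rewrite big_ord_recl /= => H [i [Hi ci]].
have [c0|c0] := eqVneq (c 0%N) 0.
  apply: (IH m.+1 (fun j => c j.+1)).
    rewrite -[RHS]H c0 scale0r add0r; apply: eq_bigr => j _.
    by rewrite ?lift0 ?addnS ?addSn.
  case: i Hi ci => [|j] Hj cj; first by rewrite c0 eqxx in cj.
  by exists j.
exists m; rewrite mpow_spow.
pose T := \sum_(j < n) c j.+1 *: spow x j.
pose u := - (c 0%N)^-1 *: T.
apply: (key HI Hq (u := u)).
  rewrite /u memvZ // /T; apply: memv_suml => j _; rewrite memvZ //.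
  exact: spow_mem.
have HT : s (spow x m) T = - (c 0%N *: spow x m).
  rewrite /T s_sumr; apply: (addrI (c 0%N *: spow x m)); rewrite addrN.
  apply: etrans _ H; rewrite addn0; congr (_ + _); apply: eq_bigr => j _; rewrite sZr spowM ?lift0 ?addnS //.
by rewrite /u sZr HT scalerN scaleNr opprK scalerA mulVf // scale1r.
Qed.


Lemma qreg_nil (I : {vspace V}) : sym_ideal mul I -> (forall x, x \in I -> qreg x) ->
  forall x, x \in I -> nilpotent_elt mul x.
Proof.
move=> HI Hq x xI.
pose d := \dim (fullv : {vspace V}).
pose X := [tuple spow x i | i < d.+1].
have nfree : ~~ free X.
  rewrite /free size_tuple; apply/negP => /eqP E.
  have := dimvS (subvf <<X>>%VS); rewrite E -/d ltnn //.
have : ~ (forall k : 'I_d.+1 -> K, \sum_(i < d.+1) k i *: X`_i = 0 -> forall i, k i = 0).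
  by move=> H; move/negP: nfree; apply; apply/freeP.
move=> H1; have [k Hk] := not_all_ex_not _ _ H1.
have [Hs Hk2] := imply_to_and _ _ Hk.
have [i Hi] := not_all_ex_not _ _ Hk2.
apply: (Qn HI Hq xI (n := d.+1) (m := 0%N) (c := fun j => k (inord j))).
  rewrite -[RHS]Hs; apply: eq_bigr => j _; by rewrite inord_val nth_mktuple.
exists i; split => //; rewrite inord_val; exact/eqP.
Qed.


Lemma exists_maxdim (P : {vspace V} -> Prop) : P 0%VS ->
  exists U, P U /\ forall W, P W -> (\dim W <= \dim U)%N.
Proof.
move=> P0; apply: NNPP => H.
have step : forall U, P U -> exists W, P W /\ (\dim U < \dim W)%N.
  move=> U PU; apply: NNPP => H2; apply: H; exists U; split => // W PW.
  rewrite leqNgt; apply/negP => lt; apply: H2; by exists W.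
have big k : exists U, P U /\ (k <= \dim U)%N.
  elim: k => [|k [U [PU Hk]]]; first by exists 0%VS.
  have [W [PW HW]] := step U PU; exists W; split => //.
  exact: leq_ltn_trans Hk HW.
have [U [_ HU]] := big (\dim (fullv : {vspace V})).+1.
by have := leq_trans HU (dimvS (subvf U)); rewrite ltnn.
Qed.

Lemma maxdim_greatest (P : {vspace V} -> Prop) (U : {vspace V}) :
  (forall W, P W -> (\dim W <= \dim U)%N) -> forall I, P (I + U)%VS -> (I <= U)%VS.
Proof.
move=> Hmax I PI.
have /eqP E : U == (I + U)%VS by rewrite eqEdim addvSr Hmax.
by rewrite E addvSl.
Qed.

Lemma sym_ideal_add (I U : {vspace V}) : sym_ideal mul I -> sym_ideal mul U ->
  sym_ideal mul (I + U)%VS.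
Proof.
move=> HI HU x y /memv_addP [a aI [c cU ->]].
by rewrite sDl; apply: memv_add; [exact: HI | exact: HU].
Qed.

Lemma lie_ideal_add (I U : {vspace V}) : lie_ideal mul I -> lie_ideal mul U ->
  lie_ideal mul (I + U)%VS.
Proof.
move=> HI HU x y /memv_addP [a aI [c cU ->]].
by rewrite bDl; apply: memv_add; [apply: HI | apply: HU].
Qed.

Lemma qreg_add (I U : {vspace V}) : sym_ideal mul U ->
  (forall x, x \in I -> qreg x) -> (forall x, x \in U -> qreg x) ->
  forall x, x \in (I + U)%VS -> qreg x.
Proof.
move=> HU HqI HqU x /memv_addP [i iI [j jU ->]].
have [y Hy] := HqI i iI.
have j'U : j + s y j \in U.
  by rewrite sC; exact: (memvD jU (HU j y jU)).
have [z Hz] := HqU _ j'U.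
exists (y + z + s y z).
have e1 : s i (s y z) = s z (s i y) by rewrite [RHS]sC s_assoc.
have e2 : s j (s y z) = s (s y j) z by rewrite [s y j]sC s_assoc.
have e3 : s i z = s z i by rewrite sC.
have e4 : s j y = s y j by rewrite sC.
have e5 : s y z = s z y by rewrite sC.
have -> : i + j + (y + z + s y z) + s (i + j) (y + z + s y z) =
   (i + y + s i y) + (j + s y j + z + s (j + s y j) z) + s z (i + y + s i y).
  rewrite !sE' e1 e2 e3 e4 e5; modlin.
by rewrite Hy Hz s0r !addr0.
Qed.


Definition Gs (N : {vspace V}) : seq V :=
  [seq s a c | a <- vbasis N, c <- vbasis (fullv : {vspace V})].

Lemma s_in_span (N : {vspace V}) x y : x \in N -> s x y \in <<Gs N>>%VS.
Proof.
move=> xN; rewrite (coord_vbasis xN) s_suml; apply: memv_suml => i _.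
rewrite sZl memvZ //.
rewrite (coord_vbasis (memvf y)) s_sumr; apply: memv_suml => j _.
rewrite sZr memvZ //; apply: memv_span; apply: allpairs_f; apply: mem_nth;
  by rewrite size_tuple.
Qed.

Lemma G_lie (N : {vspace V}) : lie_ideal mul N ->
  forall g y, g \in <<Gs N>>%VS -> b g y \in <<Gs N>>%VS.
Proof.
move=> HN g y gG; rewrite (coord_span (X := in_tuple (Gs N)) gG) b_suml.
apply: memv_suml => i _; rewrite bZl memvZ //.
have : (in_tuple (Gs N))`_i \in Gs N by apply: mem_nth; exact: ltn_ord.
move=> /allpairsP [[a c] [/= aN cV ->]].
have aN' : a \in N by exact: vbasis_mem.
rewrite bN leibniz opprD; apply: memvB; first rewrite memvN.
  by rewrite bN sNl memvN; apply: s_in_span; apply: HN.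
exact: s_in_span.
Qed.

Lemma main_thm : exists N J : {vspace V},
    [/\ is_nilradical mul N, is_jacobson_radical mul J &
        is_largest_lie_ideal_in mul J N].
Proof.
have P0 : sym_ideal mul 0%VS /\ forall x, x \in 0%VS -> qreg x.
  split; first by move=> x y; rewrite memv0 => /eqP ->; rewrite s0l mem0v.
  by move=> x; rewrite memv0 => /eqP ->; exists 0; rewrite s0l !addr0.
have [J [[HJs HJq] HJmax]] := exists_maxdim
  (P := fun U => sym_ideal mul U /\ forall x, x \in U -> qreg x) P0.
have Jgr : forall I, sym_ideal mul I -> (forall x, x \in I -> qreg x) -> (I <= J)%VS.
  move=> I HI Hq; apply: (maxdim_greatest HJmax); split.
    exact: sym_ideal_add.
  exact: qreg_add.
have P1 : lie_ideal mul 0%VS /\ (0%VS <= J)%VS.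
  split; last exact: sub0v.
  by move=> x y; rewrite memv0 => /eqP ->; rewrite b0l mem0v.
have [N [[HNl HNJ] HNmax]] := exists_maxdim
  (P := fun U => lie_ideal mul U /\ (U <= J)%VS) P1.
have Ngr : forall I, lie_ideal mul I -> (I <= J)%VS -> (I <= N)%VS.
  move=> I HI IJ; apply: (maxdim_greatest HNmax); split.
    exact: lie_ideal_add.
  by rewrite subv_add IJ HNJ.
have Jnil : forall x, x \in J -> nilpotent_elt mul x by exact: qreg_nil.
have NsN : forall x y, x \in N -> s x y \in N.
  move=> x y xN.
  have QN : ((N + <<Gs N>>)%VS <= N)%VS.
    apply: Ngr.
      apply: lie_ideal_add => // g z gG; exact: G_lie.
    rewrite subv_add HNJ; apply/span_subvP => g /allpairsP [[a c] [/= aN _ ->]].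
    apply: HJs; apply: (subvP HNJ); exact: vbasis_mem.
  by apply: (subvP QN); apply: (subvP (addvSr _ _)); exact: s_in_span.
exists N, J; split.
- split.
  + move=> x y xN; rewrite !mul_bs; split; apply: memvD.
    * exact: HNl.
    * exact: NsN.
    * by rewrite bN memvN; apply: HNl.
    * by rewrite sC; apply: NsN.
  + by move=> x xN; apply: Jnil; apply: (subvP HNJ).
  + move=> I HI Hn.
    have HIl : lie_ideal mul I.
      move=> x y xI; rewrite /pbracket; apply: memvZ; apply: memvB.
        exact: (HI x y xI).1.
      exact: (HI x y xI).2.
    have HIs : sym_ideal mul I.
      move=> x y xI; rewrite /psym; apply: memvZ; apply: memvD.
        exact: (HI x y xI).1.
      exact: (HI x y xI).2.
    apply: Ngr => //; apply: Jgr => // x xI; apply: nil_qreg; exact: Hn.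
- by split.
- by split.
Qed.

End S.

Unset Implicit Arguments.
Theorem mainTheorem8 (K : fieldType) (V : vectType K) (mul : V -> V -> V)
  (h2 : 2%:R != 0 :> K) (h3 : 3%:R != 0 :> K)
  (hbil : bilinear_prod mul) (hadm : admissible_identity mul) :
  exists N J : {vspace V},
    [/\ is_nilradical mul N, is_jacobson_radical mul J &
        is_largest_lie_ideal_in mul J N].
Proof. exact: main_thm. Qed.
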